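(* Let $G\cong C_{n_1}\oplus\cdots\oplus C_{n_r}$ with $|G|\ge3$ and $1<n_1\mid\cdots\mid n_r$. Then \[[1,n_r-2]\cup\Big[1,-1+\sum_{i=1}^r\Big\lfloor\frac{n_i}{2}\Big\rfloor\Big]\subset\Delta(G).\]
   Context: Intervals are sets of integers: $[a,b]=\{z\in\mathbb{Z}: a\le z\le b\}$. For $A\subset\mathbb{Z}$, $\Delta(A)$ is the set of $d\in\mathbb{N}$ such that there is $l\in A$ with $A\cap[l,l+d]=\{l,l+d\}$. For a finite abelian group $G$, $\mathcal{B}(G)$ is the monoid of zero-sum sequences over $G$ (elements of the free abelian monoid on $G$ whose terms sum to $0$), its atoms are minimal zero-sum sequences, $\mathsf{L}(B)$ is the set of lengths of factorizations of $B$ into atoms, and $\Delta(G)=\bigcup_{B\in\mathcal{B}(G)}\Delta(\mathsf{L}(B))$. *)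

(* Defs.v *)
From HB Require Import structures.
From mathcomp Require Import all_boot all_order all_algebra all_fingroup all_solvable.
Set Implicit Arguments. Unset Strict Implicit. Unset Printing Implicit Defensive.

Local Open Scope group_scope.

Section Defs.
Variable gT : finGroupType.

(* Sequences over G (multiplicative notation; G abelian in applications),
   modelled as finite lists up to permutation (perm_eq). *)
Definition seq_over (G : {set gT}) (s : seq gT) : Prop := all (mem G) s.

Definition zero_sum (s : seq gT) : Prop := \prod_(g <- s) g = 1.

(* t divides s in the free abelian monoid: sub-multiset *)
Definition submset (t s : seq gT) : Prop :=
  forall x : gT, count_mem x t <= count_mem x s.

Definition atom (G : {set gT}) (s : seq gT) : Prop :=
  [/\ seq_over G s, s <> [::], zero_sum s &
      forall t : seq gT, t <> [::] -> submset t s -> zero_sum t -> perm_eq t s].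

Definition lengths (G : {set gT}) (B : seq gT) (k : nat) : Prop :=
  exists fs : seq (seq gT),
    [/\ size fs = k, forall a, a \in fs -> atom G a & perm_eq (flatten fs) B].

Definition delta_set (L : nat -> Prop) (d : nat) : Prop :=
  0 < d /\ exists l, [/\ L l, L (l + d) & forall m, l < m < l + d -> ~ L m].

Definition DeltaG (G : {set gT}) (d : nat) : Prop :=
  exists B : seq gT, [/\ seq_over G B, zero_sum B & delta_set (lengths G B) d].

End Defs.

(* Main.v *)
Require Import Defs.
From HB Require Import structures.
From mathcomp Require Import all_boot all_order all_algebra all_fingroup all_solvable.
From mathcomp Require Import zify.
Set Implicit Arguments. Unset Strict Implicit. Unset Printing Implicit Defensive.

Section MS.
Variable T : eqType.
Definition msub (t s : seq T) := forall x, count_mem x t <= count_mem x s.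

Lemma perm_cnt (s t : seq T) : (forall x, count_mem x s = count_mem x t) -> perm_eq s t.
Proof. move=> H; rewrite /perm_eq; apply/allP => x _ /=; by rewrite H. Qed.

Lemma cnt_perm (s t : seq T) x : perm_eq s t -> count_mem x s = count_mem x t.
Proof. by move/seq.permP => ->. Qed.

Lemma cnt_mem (s : seq T) x : (x \in s) = (0 < count_mem x s).
Proof. by rewrite -has_pred1 has_count. Qed.

Lemma msub_split t s : msub t s -> exists u, perm_eq s (t ++ u).
Proof.
elim: t s => [|x t IH] s H; first by exists s.
have xs : x \in s.
  by rewrite cnt_mem; have := H x; rewrite /= eqxx; lia.
have pr := perm_to_rem xs.
have [u Hu] : exists u, perm_eq (rem x s) (t ++ u).
  apply: IH => y; have := H y; rewrite (cnt_perm y pr) /=; lia.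
exists u; apply: (perm_trans pr); by rewrite /= perm_cons.
Qed.

Lemma msub_size t s : msub t s -> size t <= size s.
Proof. by case/msub_split=> u /perm_size ->; rewrite size_cat leq_addr. Qed.

Lemma msub_eq_size t s : msub t s -> size t = size s -> perm_eq t s.
Proof.
case/msub_split=> u pu; rewrite (perm_size pu) size_cat => E.
have : size u = 0 by lia.
by move/size0nil => Eu; move: pu; rewrite Eu cats0 perm_sym.
Qed.

Lemma msub_cat t x y : msub t (x ++ y) ->
  exists t1 t2, [/\ perm_eq t (t1 ++ t2), msub t1 x & msub t2 y].
Proof.
elim: t => [|z t IH] H.
  by exists [::], [::]; split=> // w.
have [t1 [t2 [p1 s1 s2]]] : exists t1 t2, [/\ perm_eq t (t1 ++ t2), msub t1 x & msub t2 y].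
  apply: IH => w; have := H w; rewrite /=; lia.
have Hz := H z; rewrite /= eqxx count_cat (cnt_perm z p1) count_cat in Hz.
case: (ltnP (count_mem z t1) (count_mem z x)) => hz.
- exists (z :: t1), t2; split => //.
  + by rewrite /= perm_cons.
  + move=> w /=; have := s1 w; case E: (z == w) => //=; move/eqP: E => <-; lia.
- exists t1, (z :: t2); split => //.
  + apply: (@perm_trans _ (z :: (t1 ++ t2))); first by rewrite perm_cons.
    by rewrite -cat1s -(cat1s z t2) perm_catCA.
  + move=> w /=; have := s2 w; case E: (z == w) => //=; move/eqP: E => <-.
    have := s1 z; lia.
Qed.

Lemma msub_nseq t n x : msub t (nseq n x) -> perm_eq t (nseq (size t) x) /\ size t <= n.
Proof.
move=> H.
have al : all (pred1 x) t.
  apply/allP => w wt; have := H w; rewrite count_nseq /=.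
  rewrite cnt_mem in wt; case E: (x == w); first by rewrite /= eq_sym E.
  rewrite mul0n; lia.
have cs : count_mem x t = size t by apply/eqP; rewrite -all_count.
split.
- apply: perm_cnt => w; rewrite count_nseq /=.
  case E: (x == w) => /=.
    by move/eqP: E => <-; rewrite cs mul1n.
  apply/eqP; rewrite -leqn0 leqNgt -cnt_mem; apply/negP => wt.
  by move/allP: al => /(_ w wt) /= /eqP Ew; rewrite Ew eqxx in E.
- by have := H x; rewrite cs count_nseq /= eqxx mul1n.
Qed.

Lemma msub_flatten a (fs : seq (seq T)) : a \in fs -> msub a (flatten fs).
Proof.
elim: fs => //= c fs IH; rewrite inE => /orP [/eqP -> | /IH H] w; rewrite count_cat.
  exact: leq_addr.
by apply: leq_trans (H w) _; exact: leq_addl.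
Qed.

Lemma msub_perm t s s' : msub t s -> perm_eq s s' -> msub t s'.
Proof. by move=> H p w; rewrite -(cnt_perm w p). Qed.

Lemma msub_trans t s u : msub t s -> msub s u -> msub t u.
Proof. by move=> H1 H2 w; apply: leq_trans (H1 w) (H2 w). Qed.

Lemma perm_msub t s : perm_eq t s -> msub t s.
Proof. by move=> p w; rewrite (cnt_perm w p). Qed.

End MS.

Lemma msub_all (T : eqType) (t s : seq T) (P : pred T) : msub t s -> all P s -> all P t.
Proof.
move=> H /allP al; apply/allP => w wt; apply: al.
by rewrite cnt_mem; rewrite cnt_mem in wt; apply: leq_trans wt (H w).
Qed.

Section Blocks.
Variable T : eqType.
Variable f : nat -> T.
Definition blk (s : seq nat) (p : nat -> nat) := flatten [seq nseq (p i) (f i) | i <- s].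

Lemma blk_dec s x t : uniq s -> msub t (blk s x) ->
  exists p, (forall i, p i <= x i) /\ perm_eq t (blk s p).
Proof.
elim: s t => [|i s IH] t.
  move=> _ H; exists x; split => //; have := msub_size H; rewrite /blk /=.
  by case: t H => //.
rewrite /= => /andP [ni us] /msub_cat [t1 [t2 [pt s1 s2]]].
have [p' [le' pt2]] := IH t2 us s2.
have [pt1 le1] := msub_nseq s1.
exists (fun k => if k == i then size t1 else p' k); split.
  by move=> k; case: eqP => [-> //| _]; exact: le'.
apply: (perm_trans pt); rewrite /blk /= eqxx; apply: perm_cat => //.
have -> : [seq nseq (if k == i then size t1 else p' k) (f k) | k <- s] =
          [seq nseq (p' k) (f k) | k <- s].
  apply/eq_in_map => k ks; case: eqP => // E; by move: ni; rewrite -E ks.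
exact: pt2.
Qed.

Lemma blk_ext s p q : {in s, p =1 q} -> blk s p = blk s q.
Proof. by move=> H; rewrite /blk; congr flatten; apply/eq_in_map => i /H ->. Qed.

Lemma blk_size s p : size (blk s p) = \sum_(i <- s) p i.
Proof. by elim: s => [|i s IH]; rewrite /blk /= ?big_nil ?big_cons // size_cat size_nseq -IH. Qed.

Lemma blk_cnt s p q x w : {in s, forall i, p i + q i = x i} ->
  count_mem w (blk s x) = count_mem w (blk s p) + count_mem w (blk s q).
Proof.
elim: s => [|i s IH] H; rewrite /blk //= !count_cat !count_nseq.
rewrite -(H i (mem_head _ _)) /blk in IH *; rewrite IH; last first.
  by move=> k ks; apply: H; rewrite inE ks orbT.
rewrite mulnDr; lia.
Qed.

Lemma blk_mem s p w : w \in blk s p -> exists2 i, i \in s & (0 < p i /\ w = f i).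
Proof.
case/flattenP => l /mapP [i si ->] /nseqP [-> pos]; by exists i.
Qed.

Lemma blk0 s : blk s (fun _ => 0) = [::].
Proof. by elim: s. Qed.

End Blocks.

Lemma sum_choose (s : seq nat) (g : nat -> nat) m : uniq s -> m <= \sum_(i <- s) g i ->
  exists a : nat -> nat, (forall i, a i <= g i) /\ \sum_(i <- s) a i = m.
Proof.
elim: s m => [|i s IH] m.
  by rewrite big_nil leqn0 => _ /eqP ->; exists (fun _ => 0); split => //; rewrite big_nil.
rewrite /= big_cons => /andP [ni us] hm.
case: (leqP m (\sum_(k <- s) g k)) => h.
  have [a [ag sa]] := IH m us h.
  exists (fun k => if k == i then 0 else a k); split.
    by move=> k; case: eqP => // _; exact: ag.
  rewrite big_cons eqxx add0n -sa; apply: eq_big_seq => k ks.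
  by case: eqP => // E; move: ni; rewrite -E ks.
exists (fun k => if k == i then m - \sum_(k <- s) g k else g k); split.
  by move=> k; case: eqP => [-> | _] //; lia.
rewrite big_cons eqxx.
have -> : \sum_(j <- s) (if j == i then m - \sum_(k <- s) g k else g j) = \sum_(k <- s) g k.
  by apply: eq_big_seq => k ks; case: eqP => // E; move: ni; rewrite -E ks.
lia.
Qed.

Lemma modn_cases x n : (x < 2 * n)%N -> (x < n /\ x %% n = x)%N \/ (n <= x /\ x %% n = x - n)%N.
Proof.
case: (ltnP x n) => h; first by left; rewrite modn_small.
right; split => //; rewrite -{1}(subnK h) modnDr modn_small //; lia.
Qed.


Section Grp.
Variable gT : finGroupType.
Local Open Scope group_scope.
Implicit Types (A : {group gT}) (s t : seq gT) (x y : gT).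

Lemma ab_comm A x y : abelian A -> x \in A -> y \in A -> commute x y.
Proof. move=> /centsP cA xA yA; exact: (cA x xA y yA). Qed.

Lemma prod_rem A s x : abelian A -> all (mem A) s -> x \in s ->
  \prod_(y <- s) y = x * \prod_(y <- rem x s) y.
Proof.
move=> abA; elim: s => //= y s IH /andP[yA sA]; rewrite inE.
case: (eqVneq y x) => [-> _ | ne]; first by rewrite big_cons.
move=> /= xs.
have xA : x \in A by move/allP: sA => /(_ x xs).
by rewrite !big_cons IH // !mulgA (ab_comm abA yA xA).
Qed.

Lemma prod_perm A s t : abelian A -> all (mem A) s -> perm_eq s t ->
  \prod_(y <- s) y = \prod_(y <- t) y.
Proof.
move=> abA; elim: s t => [|x s IH] t sA p.
  by move: p; rewrite perm_sym => /perm_nilP ->.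
have xt : x \in t by rewrite -(perm_mem p) mem_head.
have tA : all (mem A) t by rewrite -(perm_all _ p).
rewrite (prod_rem abA tA xt) big_cons; congr (_ * _).
apply: IH; first by case/andP: sA.
by rewrite -(perm_cons x); apply: perm_trans p (perm_to_rem xt).
Qed.

Lemma prod_cat s t : \prod_(y <- s ++ t) y = \prod_(y <- s) y * \prod_(y <- t) y.
Proof. by rewrite big_cat. Qed.

Lemma prod_nseq n x : \prod_(y <- nseq n x) y = x ^+ n.
Proof. by elim: n => [|n IH]; rewrite ?big_nil //= big_cons IH expgS. Qed.

Lemma prod_in A s : all (mem A) s -> \prod_(y <- s) y \in A.
Proof. move=> /allP sA; rewrite big_seq; apply: group_prod => i; exact: sA. Qed.

Lemma prod_inv A s : abelian A -> all (mem A) s ->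
  \prod_(y <- map invg s) y = (\prod_(y <- s) y)^-1.
Proof.
move=> abA; elim: s => [|x s IH] /=; first by rewrite !big_nil invg1.
case/andP=> xA sA; rewrite !big_cons IH // invMg; congr (_ * _).
Abort.

Lemma prod_inv A s : abelian A -> all (mem A) s ->
  \prod_(y <- map invg s) y = (\prod_(y <- s) y)^-1.
Proof.
move=> abA; elim: s => [|x s IH] /=; first by rewrite !big_nil invg1.
case/andP=> xA sA; rewrite !big_cons IH // invMg.
have cm : commute x^-1 (\prod_(y <- s) y)^-1.
  apply: ab_comm abA _ _; rewrite groupV //; exact: prod_in.
by rewrite cm.
Qed.

Lemma cnt_inv s y : count_mem y (map invg s) = count_mem y^-1 s.
Proof. by rewrite count_map; apply: eq_count => w /=; rewrite eqg_invLR. Qed.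

Lemma msub_inv t s : msub t (map invg s) -> exists t', msub t' s /\ t = map invg t'.
Proof.
move=> H; exists (map invg t); split; last by rewrite (mapK invgK).
by move=> w; rewrite cnt_inv; have := H w^-1; rewrite cnt_inv invgK.
Qed.

Lemma pair_atom A x : x \in A -> x != 1 -> atom A [:: x; x^-1].
Proof.
move=> xA x1; split.
- by rewrite /seq_over /= xA groupV xA.
- by [].
- by rewrite /zero_sum !big_cons big_nil mulg1 mulgV.
move=> t tn ts tz.
have sz := msub_size ts; rewrite /= in sz.
case: t tn ts tz sz => [//|y [|y' t]] _ ts tz sz; last first.
  case: t ts tz sz => [|w t] ts tz sz; last by rewrite /= in sz; lia.
  by apply: msub_eq_size.
move: tz; rewrite /zero_sum big_cons big_nil mulg1 => y1.
have := ts 1; rewrite /= y1 eqxx /= invg_eq1 (negbTE x1).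
by [].
Qed.

Lemma sym_size A T V : atom A T -> perm_eq T (V ++ map invg V) -> V != [::] -> size T = 2%N.
Proof.
case=> TA Tn Tz Tmin; case: V => [//|x V] p _.
have : perm_eq [:: x; x^-1] T.
  apply: Tmin => //.
  - move=> w; rewrite (cnt_perm w p) /= count_cat /=; lia.
  - by rewrite /zero_sum !big_cons big_nil mulg1 mulgV.
by move/perm_size => <-.
Qed.

Lemma flat_stat k z (fs : seq (seq gT)) :
  (forall a, a \in fs -> size a = (2 + k * count_mem z a)%N) ->
  size (flatten fs) = (2 * size fs + k * count_mem z (flatten fs))%N.
Proof.
elim: fs => [_|a fs IH H] /=; first lia.
rewrite size_cat count_cat IH; last first.
  by move=> c cf; apply: H; rewrite inE cf orbT.
rewrite (H a (mem_head _ _)) mulnDr mulnS; set c1 := (k * _)%N; set c2 := (k * _)%N; set c3 := (2 * _)%N; lia.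
Qed.

Lemma atom_fact A C rest : atom A C -> (forall a, a \in rest -> atom A a) ->
  perm_eq (flatten rest) C -> size rest = 1%N.
Proof.
case=> _ Cn _ Cmin; case: rest => [|a rest] rA p.
  by move: p; rewrite /= perm_sym => /perm_nilP.
have [_ an az _] := rA a (mem_head _ _).
have pa : perm_eq a C := Cmin a an (msub_perm (msub_flatten (mem_head a rest)) p) az.
have := perm_size p; rewrite /= size_cat (perm_size pa) => E.
case: rest rA {p} E => //= a' rest rA; rewrite size_cat.
have [_ an' _ _] : atom A a' by apply: rA; rewrite !inE eqxx orbT.
by case: a' an' {rA} => //= w a' _; lia.
Qed.

Lemma frame A B k z :
  (forall T, atom A T -> submset T B ->
     size T = (2 + k * count_mem z T)%N \/ exists C, atom A C /\ perm_eq B (T ++ C)) ->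
  forall fs, (forall a, a \in fs -> atom A a) -> perm_eq (flatten fs) B ->
     size fs = 2%N \/ (2 * size fs + k * count_mem z B = size B)%N.
Proof.
move=> H fs fsA pf.
case: (boolP (all (fun T => size T == 2 + k * count_mem z T)%N fs)) => [/allP al | /allPn [T Tfs nT]].
  right; rewrite -(perm_size pf) -(cnt_perm z pf) (@flat_stat k z) //.
  by move=> a /al /eqP.
left; have TB : submset T B := msub_perm (msub_flatten Tfs) pf.
case: (H T (fsA T Tfs) TB) => [E | [C [CA pC]]]; first by rewrite E eqxx in nT.
have pfs := perm_to_rem Tfs.
have pr : perm_eq (flatten (rem T fs)) C.
  rewrite -(perm_cat2l T); apply: perm_trans _ pC.
  apply: perm_trans _ pf; rewrite perm_sym; exact: (perm_flatten pfs).
have := atom_fact CA _ pr; rewrite (perm_size pfs) /= => ->//.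
by move=> a /mem_rem; apply: fsA.
Qed.

Lemma delta_from A B k z K :
  (forall T, atom A T -> submset T B ->
     size T = (2 + k * count_mem z T)%N \/ exists C, atom A C /\ perm_eq B (T ++ C)) ->
  lengths A B 2 -> lengths A B K -> (2 * K + k * count_mem z B = size B)%N -> (2 < K)%N ->
  delta_set (lengths A B) (K - 2).
Proof.
move=> H L2 LK EK K2; split; first lia.
exists 2%N; split => //; first by rewrite subnKC // ltnW.
move=> m /andP[m1 m2] [fs [sz fsA pf]].
case: (frame H fsA pf); rewrite sz => E; lia.
Qed.

End Grp.


Section Dprod.
Variable gT : finGroupType.
Local Open Scope group_scope.
Implicit Types (x y : gT) (b : seq gT).

Lemma dp_mem b (G : {group gT}) : \big[dprod/1]_(x <- b) <[x]> = G ->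
  forall x, x \in b -> x \in G.
Proof.
elim: b G => [|y b IH] G //.
rewrite big_cons => /dprodP [[K H defK defH] defG _ _] x.
rewrite inE => /orP [/eqP -> | xb].
- rewrite -defG defK defH; apply: (subsetP (mulG_subl H K)); by rewrite -defK cycle_id.
- rewrite -defG defK defH; apply: (subsetP (mulG_subr K H)); exact: IH defH x xb.
Qed.

Lemma dp_ab b (G : {group gT}) : \big[dprod/1]_(x <- b) <[x]> = G -> abelian G.
Proof.
elim: b G => [|y b IH] G.
  by rewrite big_nil => <-; exact: abelian1.
rewrite big_cons => /dprodP [[K H defK defH] defG cKH _].
rewrite -defG defK defH abelianM (IH H defH) -defK cycle_abelian /= -defH; exact: cKH.
Qed.

Lemma iota1 n : iota 1 n = map (addn 1) (iota 0 n).
Proof. exact: (iotaDl 1 0 n). Qed.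

Lemma dp_ind b (G : {group gT}) (f g : nat -> gT) :
  \big[dprod/1]_(x <- b) <[x]> = G ->
  (forall i, (i < size b)%N -> f i \in <[nth 1 b i]>) ->
  (forall i, (i < size b)%N -> g i \in <[nth 1 b i]>) ->
  \prod_(i <- iota 0 (size b)) f i = \prod_(i <- iota 0 (size b)) g i ->
  forall i, (i < size b)%N -> f i = g i.
Proof.
elim: b G f g => [|y b IH] G f g //.
rewrite big_cons => /dprodP [[K H defK defH] defG cKH tiKH] fK gK.
rewrite defK defH in tiKH.
rewrite /= !big_cons iota1 !big_map => E.
set Y1 := \prod_(j <- _) f (1 + j) in E.
set Y2 := \prod_(j <- _) g (1 + j) in E.
have inH : forall h : nat -> gT, (forall i, (i < size b)%N -> h (1 + i)%N \in <[nth 1 (y :: b) (1 + i)]>) ->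
   \prod_(j <- iota 0 (size b)) h (1 + j) \in H.
  move=> h hH; rewrite big_seq; apply: group_prod => i; rewrite mem_iota add0n => ib.
  have := hH i ib; rewrite add1n /= => hi.
  have : <[nth 1 b i]> \subset H by rewrite cycle_subG (dp_mem defH) // mem_nth.
  by move/subsetP; apply.
have Y1H : Y1 \in H by apply: inH => i ib; apply: fK; rewrite /= add1n.
have Y2H : Y2 \in H by apply: inH => i ib; apply: gK; rewrite /= add1n.
have f0K : f 0%N \in K by rewrite -defK; exact: (fK 0%N).
have g0K : g 0%N \in K by rewrite -defK; exact: (gK 0%N).
have eqw : (g 0%N)^-1 * f 0%N = Y2 * Y1^-1.
  have e2 : (g 0%N)^-1 * (f 0%N * Y1) = Y2 by rewrite E mulKg.
  by rewrite -e2 mulgA mulgK.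
have w1 : (g 0%N)^-1 * f 0%N = 1.
  apply/set1gP; rewrite -tiKH inE; apply/andP; split; first by rewrite groupM ?groupV.
  by rewrite eqw groupM ?groupV.
have fg0 : f 0%N = g 0%N by apply: (mulgI (g 0%N)^-1); rewrite w1 mulVg.
have Y12 : Y1 = Y2 by apply: (mulgI (f 0%N)); rewrite E fg0.
case=> [_|i] //= ib.
have := IH H (fun j => f (1 + j)%N) (fun j => g (1 + j)%N) defH.
apply => //.
- by move=> j jb; have := fK j.+1; rewrite add1n; apply.
- by move=> j jb; have := gK j.+1; rewrite add1n; apply.
Qed.

End Dprod.




Section Part1.
Variable gT : finGroupType.
Local Open Scope group_scope.
Variables (G : {group gT}) (g : gT) (j : nat).
Hypotheses (abG : abelian G) (gG : g \in G) (j2 : (2 <= j)%N) (jn : (j < #[g])%N).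

Local Notation n := #[g].
Local Notation z := (g ^+ j).
Local Notation k := (#[g] - j - 1)%N.
Definition Q p q c := nseq p g ++ nseq q g^-1 ++ nseq c z.

Lemma Q_in p q c : all (mem G) (Q p q c).
Proof.
by rewrite /Q !all_cat !all_nseq /= groupV groupX // gG !orbT.
Qed.

Lemma Q_size p q c : size (Q p q c) = (p + q + c)%N.
Proof. by rewrite /Q !size_cat !size_nseq addnA. Qed.

Lemma Q_zs p q c : zero_sum (Q p q c) <-> ((p + j * c) %% n = q %% n)%N.
Proof.
rewrite /zero_sum /Q !prod_cat !prod_nseq expVgn -expgnA.
have cm : commute (g ^+ q)^-1 (g ^+ (j * c)).
  apply: ab_comm abG _ _; by rewrite ?groupV groupX.
rewrite cm mulgA -expgnDr; split.
- move=> E; apply/eqP; rewrite -eq_expg_mod_order; apply/eqP.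
  by apply: (mulIg (g ^+ q)^-1); rewrite mulgV.
- by move/eqP; rewrite -eq_expg_mod_order => /eqP ->; rewrite mulgV.
Qed.

Lemma Q_dec t p0 q0 c0 : msub t (Q p0 q0 c0) ->
  exists p q c, [/\ (p <= p0)%N, (q <= q0)%N, (c <= c0)%N & perm_eq t (Q p q c)].
Proof.
case/msub_cat => t1 [t2 [pt s1 /msub_cat [t3 [t4 [pt2 s3 s4]]]]].
have [p1 le1] := msub_nseq s1; have [p3 le3] := msub_nseq s3; have [p4 le4] := msub_nseq s4.
exists (size t1), (size t3), (size t4); split => //.
apply: (perm_trans pt); rewrite /Q; apply: perm_cat => //.
apply: (perm_trans pt2); exact: perm_cat.
Qed.

Lemma n_gt : (2 < n)%N.
Proof. lia. Qed.

Lemma g_ne1 : g != 1.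
Proof. apply/eqP => g1; have := jn; rewrite g1 order1; lia. Qed.

Lemma atomQ p0 q0 c0 : zero_sum (Q p0 q0 c0) -> (0 < p0 + q0 + c0)%N ->
  (forall p q c, (p <= p0)%N -> (q <= q0)%N -> (c <= c0)%N -> ((p + j * c) %% n = q %% n)%N ->
     (0 < p + q + c)%N -> p = p0 /\ q = q0 /\ c = c0) ->
  atom G (Q p0 q0 c0).
Proof.
move=> zs pos H; split.
- exact: Q_in.
- by move=> E; have := Q_size p0 q0 c0; rewrite E /=; lia.
- exact: zs.
move=> t tn ts tz.
have [p [q [c [lp lq lc pt]]]] := Q_dec ts.
have zQ : zero_sum (Q p q c).
  rewrite /zero_sum -(prod_perm abG _ pt) //; exact: msub_all ts (Q_in _ _ _).
have pos' : (0 < p + q + c)%N.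
  have := perm_size pt; rewrite Q_size; case: t tn {ts tz pt} => //= w t _; lia.
have [E1 [E2 E3]] := H p q c lp lq lc (proj1 (Q_zs p q c) zQ) pos'.
by rewrite -E1 -E2 -E3.
Qed.

Lemma inv_pow : g^-1 = g ^+ n.-1.
Proof.
have e : g ^+ n.-1 * g = 1 by rewrite -expgSr prednK ?order_gt0 // expg_order.
by rewrite -[g ^+ _](mulgK g) e mul1g.
Qed.

Lemma z_ne_g : (g == z) = false.
Proof.
rewrite -{1}(expg1 g) eq_expg_mod_order !modn_small //; try lia.
Qed.

Lemma z_inv : (g^-1 == z) -> j = n.-1.
Proof.
rewrite inv_pow eq_expg_mod_order !modn_small //; try lia.
Qed.

Lemma kz : (k * (g^-1 == z))%N = 0%N.
Proof.
case E: (g^-1 == z); last by rewrite muln0.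
by rewrite (z_inv E); lia.
Qed.

Lemma A1 : atom G (Q n 0 0).
Proof.
apply: atomQ; first by apply/Q_zs; rewrite muln0 addn0 modnn mod0n.
  lia.
move=> p q c lp lq lc E pos.
have q0 : q = 0%N by lia.
have c0 : c = 0%N by lia.
subst; rewrite muln0 addn0 mod0n in E.
have := @modn_cases p n ltac:(lia); lia.
Qed.

Lemma A2 : atom G (Q 0 j 1).
Proof.
apply: atomQ; first by apply/Q_zs; rewrite muln1 add0n.
  lia.
move=> p q c lp lq lc E pos.
have p0 : p = 0%N by lia.
subst; case: c lc E pos => [|[|c]] lc //= E pos.
  rewrite muln0 addn0 mod0n in E.
  have := @modn_cases q n ltac:(lia); lia.
rewrite muln1 add0n in E.
have := @modn_cases q n ltac:(lia); have := @modn_cases j n ltac:(lia); lia.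
Qed.

Lemma A3 : atom G (Q (n - j) 0 1).
Proof.
apply: atomQ; first by apply/Q_zs; rewrite muln1 subnK ?modnn ?mod0n //; lia.
  lia.
move=> p q c lp lq lc E pos.
have q0 : q = 0%N by lia.
subst; rewrite mod0n in E; case: c lc E pos => [|[|c]] lc //= E pos.
  rewrite muln0 addn0 in E.
  have := @modn_cases p n ltac:(lia); lia.
rewrite muln1 in E.
have := @modn_cases (p + j) n ltac:(lia); lia.
Qed.

Lemma QQ : perm_eq (Q n 0 0 ++ Q 0 j 1) (Q n j 1).
Proof. rewrite /Q /= cats0; exact: perm_refl. Qed.

Lemma class1 T : atom G T -> msub T (Q n j 1) ->
  size T = (2 + k * count_mem z T)%N \/ exists C, atom G C /\ perm_eq (Q n j 1) (T ++ C).
Proof.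
move=> [TA Tn Tz Tmin] ts.
have [p [q [c [lp lq lc pt]]]] := Q_dec ts.
have zq : zero_sum (Q p q c).
  rewrite /zero_sum -(prod_perm abG _ pt) //; exact: msub_all ts (Q_in _ _ _).
have E := proj1 (Q_zs p q c) zq.
have pos : (0 < p + q + c)%N.
  have := perm_size pt; rewrite Q_size; case: T Tn {TA Tz Tmin ts pt} => //= w t _; lia.
case: (boolP ((0 < p) && (0 < q))%N) => [/andP [p0 q0] | npq].
  have P : perm_eq [:: g; g^-1] T.
    apply: Tmin => //.
    - move=> w; rewrite (cnt_perm w pt) /Q !count_cat !count_nseq /=.
      case: (g == w); case: (g^-1 == w); rewrite /=; lia.
    - by rewrite /zero_sum !big_cons big_nil mulg1 mulgV.
  left; rewrite -(perm_size P) -(cnt_perm z P) /= z_ne_g add0n addn0 kz //.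
have pq : (p = 0 \/ q = 0)%N by lia.
clear zq; case: c lc E pos pt => [|[|c]] lc //= E pos pt.
  rewrite muln0 addn0 in E.
  have := @modn_cases p n ltac:(lia); have := @modn_cases q n ltac:(lia) => h1 h2.
  have [e1 e2] : p = n /\ q = 0%N by lia.
  subst; right; exists (Q 0 j 1); split; first exact: A2.
  rewrite perm_sym; apply: perm_trans (perm_cat pt (perm_refl _)) _; exact: QQ.
rewrite muln1 in E.
case: pq => [p0 | q0]; subst.
  rewrite add0n in E.
  have := @modn_cases j n ltac:(lia); have := @modn_cases q n ltac:(lia) => h1 h2.
  have e2 : q = j by lia.
  subst; right; exists (Q n 0 0); split; first exact: A1.
  rewrite perm_sym; apply: perm_trans (perm_cat pt (perm_refl _)) _.
  rewrite perm_catC; exact: QQ.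
rewrite mod0n in E.
have := @modn_cases (p + j) n ltac:(lia) => h1.
have e1 : p = (n - j)%N by lia.
subst; left; rewrite (perm_size pt) (cnt_perm z pt) Q_size /Q !count_cat !count_nseq /= z_ne_g eqxx.
lia.
Qed.

Lemma cnt_flat_nseq (s : seq gT) m w : count_mem w (flatten (nseq m s)) = (m * count_mem w s)%N.
Proof. by elim: m => //= m IH; rewrite count_cat IH mulSn. Qed.

Lemma part1_delta : DeltaG G j.-1.
Proof.
exists (Q n j 1); split; first exact: Q_in.
  by apply/Q_zs; rewrite muln1 modnDl.
have -> : j.-1 = (j.+1 - 2)%N by lia.
apply: (@delta_from _ G _ k z); first exact: class1.
- exists [:: Q n 0 0; Q 0 j 1]; split => //.
  + by move=> a; rewrite !inE => /orP [/eqP -> | /eqP ->]; [exact: A1 | exact: A2].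
  + by rewrite /= cats0 QQ.
- exists (Q (n - j) 0 1 :: nseq j [:: g; g^-1]); split.
  + by rewrite /= size_nseq.
  + move=> a; rewrite inE => /orP [/eqP -> | /nseqP [-> _]]; first exact: A3.
    by apply: pair_atom => //; exact: g_ne1.
  + apply: perm_cnt => w; rewrite /= count_cat cnt_flat_nseq /Q !count_cat !count_nseq /=.
    case: (g == w); case: (g^-1 == w); rewrite /=; lia.
- rewrite Q_size /Q !count_cat !count_nseq /= z_ne_g eqxx.
  case E: (g^-1 == z); last by rewrite /=; lia.
  by rewrite (z_inv E) /=; lia.
- lia.
Qed.

End Part1.


Lemma big_mulG (gT : finGroupType) (G : {group gT}) (s : seq nat) (F H : nat -> gT) :
  abelian G -> (forall i, F i \in G) -> (forall i, H i \in G) ->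
  (\prod_(i <- s) (F i * H i) = \prod_(i <- s) F i * \prod_(i <- s) H i)%g.
Proof.
move=> abG FG HG; elim: s => [|i s IH]; first by rewrite !big_nil mulg1.
rewrite !big_cons IH !mulgA; congr (_ * _)%g; rewrite -!mulgA; congr (_ * _)%g.
apply: ab_comm abG _ _ => //; rewrite big_seq; apply: group_prod => k _; exact: FG.
Qed.

Definition relpt (x y a n : nat) := (x = a /\ y = 0) \/ (x = 0 /\ y = a /\ 2 * a = n).

Lemma ar_rel p q a n : 0 < n -> 2 * a <= n -> p <= a -> q <= a -> p %% n = (a + q) %% n -> relpt p q a n.
Proof.
move=> n0 an pa qa E; rewrite /relpt.
have := @modn_cases p n ltac:(lia); have := @modn_cases (a + q) n ltac:(lia); lia.
Qed.

Lemma pairs_cnt (gT : finGroupType) (s : seq gT) w :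
  count_mem w (flatten [seq [:: x; x^-1] | x <- s])%g = count_mem w (s ++ map invg s).
Proof.
elim: s => [|x s IH] //=; rewrite count_cat IH /= !count_cat /=.
move: (x == w) (x^-1 == w)%g (count_mem w s) (count_mem w (map invg s)) => ? ? ? ?; lia.
Qed.

Section Part2.
Variable gT : finGroupType.
Local Open Scope group_scope.
Variables (G : {group gT}) (b : seq gT) (a : nat -> nat).
Hypotheses (defG : \big[dprod/1]_(x <- b) <[x]> = G).
Local Notation r := (size b).
Local Notation e := (fun i => nth 1 b i).
Hypothesis ha : forall i, (i < r)%N -> (2 * a i <= #[e i])%N.
Local Notation I := (iota 0 r).
Local Notation E := (blk e I).
Definition PP (p : nat -> nat) := \prod_(i <- I) e i ^+ p i.
Local Notation h := (PP a)^-1.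
Definition V s p := nseq s h ++ E p.
Definition W s1 p s2 q := V s1 p ++ map invg (V s2 q).
Definition rel p q := forall i, (i < r)%N -> relpt (p i) (q i) (a i) #[e i].

Lemma abG : abelian G. Proof. exact: dp_ab defG. Qed.

Lemma e_in i : e i \in G.
Proof.
case: (ltnP i r) => ir; first by apply: (dp_mem defG); exact: mem_nth.
by rewrite nth_default.
Qed.

Lemma PP_in p : PP p \in G.
Proof. rewrite /PP big_seq; apply: group_prod => i _; exact: groupX (e_in i). Qed.

Lemma h_in : h \in G. Proof. by rewrite groupV PP_in. Qed.

Lemma E_in p : all (mem G) (E p).
Proof. apply/allP => w /blk_mem [i _ [_ ->]]; exact: e_in. Qed.

Lemma V_in s p : all (mem G) (V s p).
Proof. rewrite /V all_cat all_nseq E_in andbT; apply/orP; right; exact: h_in. Qed.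

Lemma W_in s1 p s2 q : all (mem G) (W s1 p s2 q).
Proof.
rewrite /W all_cat V_in /= all_map; apply/allP => w /(allP (V_in s2 q)) wG /=.
by rewrite groupV.
Qed.

Lemma prod_E p : \prod_(w <- E p) w = PP p.
Proof. by rewrite /blk big_flatten big_map /PP; apply: eq_bigr => i _; exact: prod_nseq. Qed.

Lemma prod_V s p : \prod_(w <- V s p) w = h ^+ s * PP p.
Proof. by rewrite /V prod_cat prod_nseq prod_E. Qed.

Lemma zs_W s1 p s2 q : zero_sum (W s1 p s2 q) <-> h ^+ s1 * PP p = h ^+ s2 * PP q.
Proof.
rewrite /zero_sum /W prod_cat (prod_inv abG (V_in s2 q)) !prod_V; split.
  by move=> E1; apply: (mulIg (h ^+ s2 * PP q)^-1); rewrite mulgV.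
by move=> ->; rewrite mulgV.
Qed.

Lemma PP_add p q : PP (fun i => p i + q i)%N = PP p * PP q.
Proof.
rewrite /PP -(big_mulG _ abG); last 2 first.
- move=> i; exact: groupX (e_in i).
- move=> i; exact: groupX (e_in i).
by apply: eq_bigr => i _; rewrite expgnDr.
Qed.

Lemma PP_ind p q : PP p = PP q -> forall i, (i < r)%N -> e i ^+ p i = e i ^+ q i.
Proof.
move=> E1 i ir; apply: (dp_ind (f := fun i => e i ^+ p i) (g := fun i => e i ^+ q i) defG) => //.
- move=> k _; exact: mem_cycle.
- move=> k _; exact: mem_cycle.
Qed.

Lemma a_lt i : (i < r)%N -> (a i < #[e i])%N.
Proof. move=> /ha; have := order_gt0 (e i); lia. Qed.

Lemma ANeq p q : (forall i, (i < r)%N -> p i <= a i)%N -> (forall i, (i < r)%N -> q i <= a i)%N ->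
  PP p = PP q -> forall i, (i < r)%N -> p i = q i.
Proof.
move=> pa qa E1 i ir; have := PP_ind E1 ir; move/eqP; rewrite eq_expg_mod_order.
have := a_lt ir; have := pa i ir; have := qa i ir => h1 h2 h3.
by rewrite !modn_small //; try lia; move/eqP.
Qed.

Lemma ANrel p q : (forall i, (i < r)%N -> p i <= a i)%N -> (forall i, (i < r)%N -> q i <= a i)%N ->
  h * PP p = PP q <-> rel p q.
Proof.
move=> pa qa; split.
- move=> E1.
  have E2 : PP p = PP (fun i => a i + q i)%N by rewrite PP_add -E1 mulgA mulgV mul1g.
  move=> i ir; have := PP_ind E2 ir; move/eqP; rewrite eq_expg_mod_order => /eqP.
  apply: ar_rel; [exact: order_gt0 | exact: ha | exact: pa | exact: qa].
- move=> R.
  have E2 : PP p = PP (fun i => a i + q i)%N.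
    rewrite /PP; apply: eq_big_seq => i; rewrite mem_iota add0n => ir.
    case: (R i ir) => [[-> ->] | [-> [-> e2]]]; first by rewrite addn0.
    by rewrite expg0 addnn -mul2n e2 expg_order.
  by rewrite E2 PP_add mulgA mulVg mul1g.
Qed.

Lemma V_dec u t x : msub u (V t x) ->
  exists s p, [/\ (s <= t)%N, (forall i, p i <= x i)%N & perm_eq u (V s p)].
Proof.
case/msub_cat => u1 [u2 [pu s1 s2]].
have [pu1 le1] := msub_nseq s1.
have [p [lp pu2]] := blk_dec (iota_uniq 0 r) s2.
exists (size u1), p; split => //.
apply: (perm_trans pu); rewrite /V; exact: perm_cat.
Qed.

Lemma W_dec u t1 x t2 y : msub u (W t1 x t2 y) ->
  exists s1 p s2 q, [/\ (s1 <= t1)%N, (forall i, p i <= x i)%N, (s2 <= t2)%N,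
     (forall i, q i <= y i)%N & perm_eq u (W s1 p s2 q)].
Proof.
case/msub_cat => u1 [u2 [pu s1 /msub_inv [u2' [s2 E2]]]]; subst u2.
have [s [p [ls lp pu1]]] := V_dec s1.
have [s' [q [ls' lq pu2]]] := V_dec s2.
exists s, p, s', q; split => //.
apply: (perm_trans pu); rewrite /W; apply: perm_cat => //; exact: perm_map.
Qed.

Lemma E_ext p q : (forall i, (i < r)%N -> p i = q i) -> E p = E q.
Proof. move=> H; apply: blk_ext => i; rewrite mem_iota add0n; exact: H. Qed.

Lemma Wcompl p q : rel p q -> perm_eq (W 1 p 0 q ++ W 0 q 1 p) (W 1 a 1 a).
Proof.
move=> R; apply: perm_cnt => w.
have cE : forall v, count_mem v (E a) = (count_mem v (E p) + count_mem v (E q))%N.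
  move=> v; apply: blk_cnt => i; rewrite mem_iota add0n => ir.
  by case: (R i ir) => [[-> ->] | [-> [-> _]]]; lia.
rewrite /W /V !count_cat !cnt_inv !count_cat /= !cE; move: (h == w) (h == w^-1) (count_mem w (E p)) (count_mem w (E q)) (count_mem w^-1 (E p)) (count_mem w^-1 (E q)) => ? ? ? ? ? ?; lia.
Qed.

Lemma zsub_ok s1 p s2 q t : msub t (W 1 a 1 a) -> perm_eq t (W s1 p s2 q) -> zero_sum t ->
  zero_sum (W s1 p s2 q).
Proof.
move=> ts pt; rewrite /zero_sum (prod_perm abG _ pt) //; exact: msub_all ts (W_in _ _ _ _).
Qed.

Lemma atomX1 x y : rel x y -> atom G (W 1 x 0 y).
Proof.
move=> R.
have xa : forall i, (i < r)%N -> (x i <= a i)%N by move=> i ir; case: (R i ir); lia.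
have ya : forall i, (i < r)%N -> (y i <= a i)%N by move=> i ir; case: (R i ir); lia.
split; first exact: W_in.
- by [].
- by apply/zs_W; rewrite expg1 expg0 mul1g; apply/ANrel.
move=> t tn ts tz.
have [s1 [p [s2 [q [l1 lp l2 lq pt]]]]] := W_dec ts.
have zW : zero_sum (W s1 p s2 q).
  rewrite /zero_sum -(prod_perm abG _ pt) //; exact: msub_all ts (W_in _ _ _ _).
have pa : forall i, (i < r)%N -> (p i <= a i)%N by move=> i ir; apply: leq_trans (lp i) (xa i ir).
have qa : forall i, (i < r)%N -> (q i <= a i)%N by move=> i ir; apply: leq_trans (lq i) (ya i ir).
have s20 : s2 = 0%N by lia.
subst s2; move/zs_W: zW; rewrite expg0 mul1g.
case: s1 l1 pt => [|[|//]] l1 pt.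
  rewrite expg0 mul1g => /ANeq => /(_ pa qa) Epq.
  have p0 : forall i, (i < r)%N -> p i = 0%N.
    by move=> i ir; have := Epq i ir; have := lp i; have := lq i; case: (R i ir); lia.
  have q0 : forall i, (i < r)%N -> q i = 0%N by move=> i ir; rewrite -Epq // p0.
  move: pt; rewrite /W /V (E_ext p0) (E_ext q0) (blk0 e) /= => /perm_nilP E0.
  by case: tn.
rewrite expg1 => /ANrel => /(_ pa qa) Rpq.
have epx : forall i, (i < r)%N -> p i = x i.
  by move=> i ir; have := lp i; have := lq i; have := R i ir; have := Rpq i ir; rewrite /relpt; lia.
have eqy : forall i, (i < r)%N -> q i = y i.
  by move=> i ir; have := lp i; have := lq i; have := R i ir; have := Rpq i ir; rewrite /relpt; lia.
by move: pt; rewrite /W /V (E_ext epx) (E_ext eqy).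
Qed.

Lemma atomX2 x y : rel x y -> atom G (W 0 y 1 x).
Proof.
move=> R.
have xa : forall i, (i < r)%N -> (x i <= a i)%N by move=> i ir; case: (R i ir); lia.
have ya : forall i, (i < r)%N -> (y i <= a i)%N by move=> i ir; case: (R i ir); lia.
split; first exact: W_in.
- move=> /(congr1 size); rewrite /W /V !size_cat size_map size_cat /=; lia.
- by apply/zs_W; rewrite expg1 expg0 mul1g; symmetry; apply/ANrel.
move=> t tn ts tz.
have [s1 [p [s2 [q [l1 lp l2 lq pt]]]]] := W_dec ts.
have zW : zero_sum (W s1 p s2 q).
  rewrite /zero_sum -(prod_perm abG _ pt) //; exact: msub_all ts (W_in _ _ _ _).
have pa : forall i, (i < r)%N -> (p i <= a i)%N by move=> i ir; apply: leq_trans (lp i) (ya i ir).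
have qa : forall i, (i < r)%N -> (q i <= a i)%N by move=> i ir; apply: leq_trans (lq i) (xa i ir).
have s10 : s1 = 0%N by lia.
subst s1; move/zs_W: zW; rewrite expg0 mul1g.
case: s2 l2 pt => [|[|//]] l2 pt.
  rewrite expg0 mul1g => /ANeq => /(_ pa qa) Epq.
  have p0 : forall i, (i < r)%N -> p i = 0%N.
    by move=> i ir; have := Epq i ir; have := lp i; have := lq i; case: (R i ir); lia.
  have q0 : forall i, (i < r)%N -> q i = 0%N by move=> i ir; rewrite -Epq // p0.
  move: pt; rewrite /W /V (E_ext p0) (E_ext q0) (blk0 e) /= => /perm_nilP E0.
  by case: tn.
rewrite expg1 => E1; have /ANrel := esym E1 => /(_ qa pa) Rqp.
have eqx : forall i, (i < r)%N -> q i = x i.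
  by move=> i ir; have := lp i; have := lq i; have := R i ir; have := Rqp i ir; rewrite /relpt; lia.
have epy : forall i, (i < r)%N -> p i = y i.
  by move=> i ir; have := lp i; have := lq i; have := R i ir; have := Rqp i ir; rewrite /relpt; lia.
by move: pt; rewrite /W /V (E_ext epy) (E_ext eqx).
Qed.


Lemma class2 T : atom G T -> msub T (W 1 a 1 a) ->
  size T = (2 + 0 * count_mem (1%g : gT) T)%N \/ exists C, atom G C /\ perm_eq (W 1 a 1 a) (T ++ C).
Proof.
move=> TA ts; have [s1 [p [s2 [q [l1 lp l2 lq pt]]]]] := W_dec ts.
have [_ Tn Tz _] := TA.
have zW := zsub_ok ts pt Tz.
have pa : forall i, (i < r)%N -> (p i <= a i)%N by move=> i _; exact: lp.
have qa : forall i, (i < r)%N -> (q i <= a i)%N by move=> i _; exact: lq.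
have symc : forall s, perm_eq T (W s p s q) -> PP p = PP q -> size T = 2%N.
  move=> s pt' Epq; have Eq := ANeq pa qa Epq.
  have e1 : W s p s q = V s p ++ map invg (V s p) by rewrite /W /V (E_ext Eq).
  rewrite e1 in pt'; apply: (sym_size TA pt').
  apply/negP => /eqP V0; move: pt'; rewrite V0 /= => /perm_nilP T0; by case: Tn.
move/zs_W: zW.
case: s1 l1 pt => [|[|//]] l1 pt; case: s2 l2 pt => [|[|//]] l2 pt; rewrite ?expg0 ?expg1 ?mul1g => E1.
- by left; rewrite mul0n addn0; apply: symc pt E1.
- have Rqp : rel q p by apply/(ANrel qa pa).
  right; exists (W 1 q 0 p); split; first exact: atomX1.
  rewrite perm_sym; apply: perm_trans (perm_cat pt (perm_refl _)) _.
  rewrite perm_catC; exact: Wcompl.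
- have Rpq : rel p q by apply/(ANrel pa qa).
  right; exists (W 0 q 1 p); split; first exact: atomX2.
  rewrite perm_sym; apply: perm_trans (perm_cat pt (perm_refl _)) _.
  exact: Wcompl.
- by left; rewrite mul0n addn0; apply: symc pt (mulgI _ _ _ E1).
Qed.

Hypothesis D2 : (2 <= \sum_(i <- I) a i)%N.

Lemma h_ne1 : h != 1.
Proof.
apply/negP => /eqP h1.
have E1 : PP a = PP (fun _ => 0%N).
  rewrite -[PP a]invgK h1 invg1 /PP big1 // => i _; exact: expg0.
have := ANeq (fun i _ => leqnn _) (fun i _ => leq0n _) E1.
move=> Z; have : \sum_(i <- I) a i = 0%N.
  rewrite big_seq big1 // => i; rewrite mem_iota add0n => ir; exact: Z.
lia.
Qed.

Lemma part2_delta : DeltaG G (\sum_(i <- I) a i).-1.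
Proof.
set D := \sum_(i <- I) a i.
exists (W 1 a 1 a); split; first exact: W_in.
  by apply/zs_W.
have -> : D.-1 = (D.+1 - 2)%N by lia.
have Ra0 : rel a (fun _ => 0%N) by move=> i _; left.
apply: (@delta_from _ G _ 0 1); first exact: class2.
- exists [:: W 1 a 0 (fun _ => 0%N); W 0 (fun _ => 0%N) 1 a]; split => //.
  + move=> x; rewrite !inE => /orP [/eqP -> | /eqP ->]; [exact: atomX1 | exact: atomX2].
  + by rewrite /= cats0 Wcompl.
- exists [seq [:: w; w^-1] | w <- V 1 a]; split.
  + by rewrite size_map /V size_cat blk_size.
  + move=> x /mapP [w wV ->]; apply: pair_atom.
      by move/allP: (V_in 1 a) => /(_ w wV).
    move: wV; rewrite /V mem_cat => /orP [/nseqP [-> _] | /blk_mem [i ii [ai ->]]].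
      exact: h_ne1.
    apply/negP => /eqP e1; move: ii; rewrite mem_iota add0n => /ha.
    rewrite e1 order1; lia.
  + by apply: perm_cnt => w; rewrite pairs_cnt.
- by rewrite /W size_cat size_map /V size_cat blk_size /=; lia.
- lia.
Qed.

End Part2.


Unset Implicit Arguments. Set Strict Implicit. Set Printing Implicit Defensive.

Local Open Scope group_scope.

Theorem lemma5p4 (gT : finGroupType) (G : {group gT}) (ns : seq nat) (b : seq gT) :
  \big[dprod/1]_(x <- b) <[x]> = G ->
  map order b = ns ->
  (2 < #|G|)%N ->
  (1 < head 0 ns)%N ->
  sorted dvdn ns ->
  forall d : nat,
    ((1 <= d <= last 0 ns - 2)%N \/
     (1 <= d <= (\sum_(n <- ns) n./2) - 1)%N) ->
    DeltaG G d.
Proof.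
move=> defG ens _ h1 _ d [/andP [d1 d2] | /andP [d1 d2]].
- case: b defG ens => [|x b'] defG ens; first by rewrite -ens in h1.
  have gG := dp_mem defG (mem_last x b').
  have ln : last 0%N ns = #[last x b'] by rewrite -ens /= last_map.
  rewrite ln in d2.
  have := @part1_delta _ G (last x b') d.+1 (dp_ab defG) gG; apply; lia.
- have es : (\sum_(n <- ns) n./2 = \sum_(i <- iota 0 (size b)) #[nth 1%g b i]./2)%N.
    by rewrite -ens big_map (big_nth (1 : gT)) /index_iota subn0.
  rewrite es in d2.
  have [a [ag sa]] := @sum_choose (iota 0 (size b)) (fun i => #[nth 1 b i]./2) d.+1 (iota_uniq 0 _) ltac:(lia).
  have -> : d = (\sum_(i <- iota 0 (size b)) a i).-1 by rewrite sa.
  apply: part2_delta defG _ _; last by rewrite sa; lia.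
  move=> i _; have := ag i; have := odd_double_half #[nth 1 b i]; rewrite -muln2 /=; lia.
Qed.
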